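(* Let $d\ge2$, $(S,\mathfrak n,\mathbf k)$ a complete regular local ring with $\mathbf k$ algebraically closed of characteristic not dividing $d$, and $0\ne f\in\mathfrak n^2$. Let $X\in\mathrm{MF}_S^d(f)$ be indecomposable of size $n$ and assume $X\cong TX$. Then there exists an $S$-linear map $\phi:S^n\to S^n$ with $\phi^d=f\cdot I_n$ and $X\cong(\phi,\phi,\dots,\phi)$.
   Context: $\mathrm{MF}_S^d(f)$ is the category of matrix factorizations of $f$ with $d$ factors: objects $X=(\phi_1:F_2\to F_1,\dots,\phi_d:F_1\to F_d)$, $F_i$ finitely generated free $S$-modules of equal rank $n$ (the size of $X$), with $\phi_1\cdots\phi_d=f\cdot1_{F_1}$; morphisms $(\alpha_1,\dots,\alpha_d)$ with $\alpha_i\phi_i=\phi_i'\alpha_{i+1}$ (indices mod $d$). The shift functor is $T(\phi_1,\dots,\phi_d)=(\phi_2,\dots,\phi_d,\phi_1)$. *)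

(* Defs.v *)
From HB Require Import structures.
From mathcomp Require Import all_boot all_order all_algebra.
Set Implicit Arguments. Unset Strict Implicit. Unset Printing Implicit Defensive.
Import GRing.Theory.
Local Open Scope ring_scope.

Section LocalRings.
Variable S : comUnitRingType.

Definition subset_of (I J : S -> Prop) := forall x, I x -> J x.

Definition is_ideal (I : S -> Prop) : Prop :=
  I 0 /\ (forall x y, I x -> I y -> I (x + y)) /\ (forall s x, I x -> I (s * x)).

Definition gen_ideal (xs : seq S) : S -> Prop :=
  fun x => exists cs : seq S, size cs = size xs /\
    x = \sum_(i < size xs) cs`_i * xs`_i.

Definition fin_gen (I : S -> Prop) : Prop :=
  exists xs : seq S, forall x, I x <-> gen_ideal xs x.

Definition noetherian : Prop := forall I, is_ideal I -> fin_gen I.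

Definition prime_ideal (P : S -> Prop) : Prop :=
  is_ideal P /\ ~ P 1 /\ (forall x y, P (x * y) -> P x \/ P y).

Definition prime_chain (e : nat) (P : nat -> S -> Prop) : Prop :=
  (forall i, (i <= e)%N -> prime_ideal (P i)) /\
  (forall i, (i < e)%N -> subset_of (P i) (P i.+1) /\ ~ subset_of (P i.+1) (P i)).

Definition krull_dim_eq (e : nat) : Prop :=
  (exists P, prime_chain e P) /\ ~ (exists P, prime_chain e.+1 P).

(* the set of non-units; S is local iff it is an ideal (the maximal ideal) *)
Definition mx_ideal : S -> Prop := fun x => x \isn't a GRing.unit.

Definition local_ring : Prop := (1 : S) != 0 /\ is_ideal mx_ideal.

Definition emb_dim_eq (e : nat) : Prop :=
  (exists xs : seq S, size xs = e /\ forall x, mx_ideal x <-> gen_ideal xs x) /\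
  (forall xs : seq S, (size xs < e)%N -> ~ (forall x, mx_ideal x <-> gen_ideal xs x)).

Definition regular_local_ring : Prop :=
  local_ring /\ noetherian /\ exists e, krull_dim_eq e /\ emb_dim_eq e.

(* membership in the power n^k of the maximal ideal n *)
Fixpoint mx_pow (k : nat) : S -> Prop :=
  match k with
  | 0 => fun _ => True
  | k'.+1 => fun x => exists ys zs : seq S, size ys = size zs /\
      (forall i, (i < size ys)%N -> mx_ideal ys`_i) /\
      (forall i, (i < size zs)%N -> mx_pow k' zs`_i) /\
      x = \sum_(i < size ys) ys`_i * zs`_i
  end.

(* n-adically complete and separated: S -> lim S/n^k is bijective *)
Definition complete_local : Prop :=
  (forall x, (forall k, mx_pow k x) -> x = 0) /\
  (forall a : nat -> S, (forall k, mx_pow k (a k.+1 - a k)) ->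
     exists x, forall k, mx_pow k (x - a k)).

(* the residue field S/n is algebraically closed: every monic polynomial
   of positive degree has a root modulo n *)
Definition residue_alg_closed : Prop :=
  forall p : {poly S}, p \is monic -> (1 < size p)%N -> exists a, mx_ideal p.[a].

(* char of the residue field does not divide d, i.e. d * 1 is nonzero in S/n *)
Definition residue_char_ndvd (d : nat) : Prop := ~ mx_ideal (d%:R).

End LocalRings.

Section MF.
Variable S : comUnitRingType.

(* an object with d factors and size n: phi i : F_{i+1} -> F_i (indices mod d,
   0-based: phi i is the paper's phi_{i+1}); matrices act on column vectors *)
Definition mfobj (d n : nat) := 'I_d -> 'M[S]_n.

Definition mx_chain (d n : nat) (X : mfobj d n) : 'M[S]_n :=
  foldr (fun i acc => X i *m acc) 1%:M (enum 'I_d).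

Definition is_MF (f : S) (d n : nat) (X : mfobj d n) : Prop :=
  mx_chain X = f%:M.

Definition is_mor (d n m : nat) (X : mfobj d n) (Y : mfobj d m)
  (al : 'I_d -> 'M[S]_(m, n)) : Prop :=
  forall i : 'I_d, al i *m X i = Y i *m al (ordS i).

Definition mf_iso (d n m : nat) (X : mfobj d n) (Y : mfobj d m) : Prop :=
  exists (al : 'I_d -> 'M[S]_(m, n)) (be : 'I_d -> 'M[S]_(n, m)),
    is_mor X Y al /\ is_mor Y X be /\
    (forall i, be i *m al i = 1%:M) /\ (forall i, al i *m be i = 1%:M).

Definition mf_shift (d n : nat) (X : mfobj d n) : mfobj d n :=
  fun i => X (ordS i).

Definition mf_dsum (d a b : nat) (Y : mfobj d a) (Z : mfobj d b) : mfobj d (a + b) :=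
  fun i => block_mx (Y i) 0 0 (Z i).

Definition mf_indecomposable (f : S) (d n : nat) (X : mfobj d n) : Prop :=
  (0 < n)%N /\
  ~ (exists (a b : nat) (Y : mfobj d a) (Z : mfobj d b),
       (0 < a)%N /\ (0 < b)%N /\ is_MF f Y /\ is_MF f Z /\ mf_iso X (mf_dsum Y Z)).

Definition mx_pow_n (n : nat) (M : 'M[S]_n) (k : nat) : 'M[S]_n :=
  iter k (mulmx M) 1%:M.

End MF.

(* Main.v *)
Require Import Defs.
From mathcomp Require Import all_boot all_order all_algebra.
From mathcomp Require Import ring.
Set Implicit Arguments. Unset Strict Implicit. Unset Printing Implicit Defensive.
Import GRing.Theory.
Local Open Scope ring_scope.

Section Ideals.
Variable S : comUnitRingType.
Hypothesis Hloc : local_ring S.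
Local Notation mx_ideal := (@Defs.mx_ideal S).

Lemma m0 : mx_ideal (0 : S).
Proof. by case: Hloc => _ [H _]. Qed.
Lemma mD (x y : S) : mx_ideal x -> mx_ideal y -> mx_ideal (x + y).
Proof. by case: Hloc => _ [_ [H _]]; apply: H. Qed.
Lemma mM (s x : S) : mx_ideal x -> mx_ideal (s * x).
Proof. by case: Hloc => _ [_ [_ H]]; apply: H. Qed.
Lemma mMr (s x : S) : mx_ideal x -> mx_ideal (x * s).
Proof. by rewrite mulrC; apply: mM. Qed.
Lemma mN (x : S) : mx_ideal x -> mx_ideal (- x).
Proof. by move=> h; rewrite -mulN1r; apply: mM. Qed.
Lemma mB (x y : S) : mx_ideal x -> mx_ideal y -> mx_ideal (x - y).
Proof. by move=> hx hy; apply: mD => //; apply: mN. Qed.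
Lemma m1 : ~ mx_ideal (1 : S).
Proof. by rewrite /mx_ideal unitr1. Qed.
Lemma unit_m (u x : S) : u \is a GRing.unit -> mx_ideal x -> (u - x) \is a GRing.unit.
Proof.
move=> hu hx; apply/negPn/negP => h.
have : mx_ideal ((u - x) + x) by apply: mD.
by rewrite subrK /mx_ideal hu.
Qed.

Lemma mx_powS k (x : S) : mx_pow k.+1 x <->
  exists l : seq (S * S), (forall p, p \in l -> mx_ideal p.1 /\ mx_pow k p.2) /\
     x = \sum_(p <- l) p.1 * p.2.
Proof.
split.
  case=> ys [zs [hs [hy [hz ->]]]].
  exists (zip ys zs); split.
    move=> p /(nthP (0,0)) [i]; rewrite size_zip hs minnn => hi <-.
    by rewrite nth_zip //=; split; [apply: hy; rewrite hs | apply: hz].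
  rewrite (big_nth (0,0)) size_zip hs minnn big_mkord.
  by apply: eq_bigr => i _; rewrite nth_zip.
case=> l [hl ->]; exists (unzip1 l), (unzip2 l); rewrite !size_map; split=> //.
split; first by move=> i hi; rewrite (nth_map (0,0)) //; apply: (hl _ (mem_nth _ hi)).1.
split; first by move=> i hi; rewrite (nth_map (0,0)) //; apply: (hl _ (mem_nth _ hi)).2.
rewrite (big_nth (0,0)) big_mkord; apply: eq_bigr => i _.
by rewrite !(nth_map (0,0)).
Qed.

Lemma powI0 k : mx_pow k (0 : S).
Proof. case: k => [//|k]; apply/mx_powS; exists [::]; split => //; by rewrite big_nil. Qed.

Lemma powID k (x y : S) : mx_pow k x -> mx_pow k y -> mx_pow k (x + y).
Proof.
case: k => [//|k] /mx_powS [l1 [h1 ->]] /mx_powS [l2 [h2 ->]].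
apply/mx_powS; exists (l1 ++ l2); split; last by rewrite big_cat.
by move=> p; rewrite mem_cat => /orP [/h1|/h2].
Qed.

Lemma powIM k (s x : S) : mx_pow k x -> mx_pow k (s * x).
Proof.
case: k => [//|k] /mx_powS [l [h ->]].
apply/mx_powS; exists [seq (s * p.1, p.2) | p <- l]; split.
  move=> q /mapP [p hp ->] /=; have [h1 h2] := h p hp; split => //; exact: mM.
by rewrite big_map mulr_sumr; apply: eq_bigr => p _; rewrite mulrA.
Qed.

Lemma powIMr k (s x : S) : mx_pow k x -> mx_pow k (x * s).
Proof. by rewrite mulrC; apply: powIM. Qed.
Lemma powIN k (x : S) : mx_pow k x -> mx_pow k (- x).
Proof. by move=> h; rewrite -mulN1r; apply: powIM. Qed.
Lemma powIB k (x y : S) : mx_pow k x -> mx_pow k y -> mx_pow k (x - y).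
Proof. by move=> hx hy; apply: powID => //; apply: powIN. Qed.

Lemma powI_sum k (I : eqType) (r : seq I) (F : I -> S) :
  (forall i, i \in r -> mx_pow k (F i)) -> mx_pow k (\sum_(i <- r) F i).
Proof.
elim: r => [|a r IH] h; first by rewrite big_nil; apply: powI0.
rewrite big_cons; apply: powID; first by apply: h; rewrite mem_head.
by apply: IH => i hi; apply: h; rewrite in_cons hi orbT.
Qed.

Lemma powI_m k (y z : S) : mx_ideal y -> mx_pow k z -> mx_pow k.+1 (y * z).
Proof. move=> hy hz; apply/mx_powS; exists [:: (y, z)]; split; last by rewrite big_seq1.
by move=> p; rewrite inE => /eqP ->.
Qed.

Lemma powI_mul a b (x y : S) : mx_pow a x -> mx_pow b y -> mx_pow (a + b) (x * y).
Proof.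
elim: a x => [|a IH] x hx hy; first by rewrite add0n; apply: powIM.
move/mx_powS: hx => [l [hl ->]]; rewrite mulr_suml addSn.
apply: powI_sum => p hp; rewrite -mulrA; have [h1 h2] := hl p hp.
by apply: powI_m => //; apply: IH.
Qed.

Lemma powI_S k (x : S) : mx_pow k.+1 x -> mx_pow k x.
Proof.
elim: k x => [//|k IH] x /mx_powS [l [hl ->]].
apply: powI_sum => p hp; have [h1 h2] := hl p hp; apply: powI_m => //; exact: IH.
Qed.

Lemma powI_le k l (x : S) : (k <= l)%N -> mx_pow l x -> mx_pow k x.
Proof.
move=> /subnK <-; elim: (l - k)%N => [//|j IH] h; apply: IH; exact: powI_S.
Qed.

Lemma powI1 (x : S) : mx_pow 1 x <-> mx_ideal x.
Proof.
split.
  move=> /mx_powS [l [hl ->]]; elim: l hl => [|p l IH] hl; first by rewrite big_nil; apply: m0.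
  rewrite big_cons; apply: mD; first by apply: mMr; apply: (hl p (mem_head _ _)).1.
  by apply: IH => q hq; apply: hl; rewrite in_cons hq orbT.
by move=> h; rewrite -[x]mulr1; apply: powI_m.
Qed.


Definition polym (p : {poly S}) := forall i, mx_ideal p`_i.

Lemma polym0 : polym 0.
Proof. by move=> i; rewrite coef0; apply: m0. Qed.
Lemma polymD p q : polym p -> polym q -> polym (p + q).
Proof. by move=> hp hq i; rewrite coefD; apply: mD. Qed.
Lemma polymN p : polym p -> polym (- p).
Proof. by move=> hp i; rewrite coefN; apply: mN. Qed.
Lemma polymB p q : polym p -> polym q -> polym (p - q).
Proof. by move=> hp hq; apply: polymD => //; apply: polymN. Qed.
Lemma polymM p q : polym p -> polym (q * p).
Proof.
move=> hp i; rewrite coefM; apply: (big_ind mx_ideal); [exact: m0| exact: mD|].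
by move=> j _; apply: mM.
Qed.
Lemma polymMr p q : polym p -> polym (p * q).
Proof. by rewrite mulrC; apply: polymM. Qed.
Lemma polymC c : mx_ideal c -> polym c%:P.
Proof. by move=> h i; rewrite coefC; case: eqP => _ //; apply: m0. Qed.

Lemma factor_mod N (p : {poly S}) : residue_alg_closed S ->
  (size p <= N)%N -> p \is monic ->
  exists l : seq S, polym (p - \prod_(a <- l) ('X - a%:P)).
Proof.
move=> Hac; elim: N p => [|N IH] p hs hm.
  by move: (monic_neq0 hm); rewrite -size_poly_eq0; move: hs; rewrite leqn0 => ->.
have [hs1|hs1] := leqP (size p) 1.
  have hs1' : size p == 1.
    by rewrite eqn_leq hs1 lt0n size_poly_eq0 monic_neq0.
  move/size_poly1P: hs1' => [c _ hc].
  have c1 : c = 1 by move: hm; rewrite monicE hc lead_coefC => /eqP.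
  exists [::]; rewrite big_nil hc c1 subrr; exact: polym0.
have [a ha] := Hac p hm hs1.
set q := p - p.[a]%:P.
have hrq : root q a by rewrite /root /q hornerD hornerN hornerC subrr.
have [q' hq'] := factor_theorem _ _ hrq.
have hsc : (size (- p.[a]%:P) < size p)%N.
  by rewrite size_polyN (leq_ltn_trans (size_polyC_leq1 _)).
have hqm : q \is monic by rewrite monicE /q lead_coefDl // -monicE.
have hq'm : q' \is monic by rewrite -(monicMr q' (monicXsubC a)) -hq'.
have hsq : size q = size p by rewrite /q size_polyDl.
have hsq' : size q = (size q').+1.
  by rewrite hq' size_Mmonic ?monic_neq0 // ?monicXsubC // size_XsubC addn2.
have hs' : (size q' <= N)%N by rewrite -ltnS -hsq' hsq; exact: hs.
have [l hl] := IH q' hs' hq'm.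
exists (a :: l); rewrite big_cons.
have -> : p = q + p.[a]%:P by rewrite /q subrK.
rewrite hq'.
have -> : q' * ('X - a%:P) + (p.[a])%:P - ('X - a%:P) * \prod_(j <- l) ('X - j%:P)
  = (q' - \prod_(j <- l) ('X - j%:P)) * ('X - a%:P) + (p.[a])%:P.
  rewrite mulrBl [_ * ('X - _)]mulrC. ring.
apply: polymD; first by apply: polymMr.
by apply: polymC.
Qed.


Lemma poly_cong (H : {poly S}) a b : mx_ideal (b - a) -> mx_ideal (H.[b] - H.[a]).
Proof.
move=> hba.
have hr : root (H - H.[a]%:P) a by rewrite /root hornerD hornerN hornerC subrr.
have [q hq] := factor_theorem _ _ hr.
have : (H - H.[a]%:P).[b] = q.[b] * (b - a) by rewrite hq hornerM hornerXsubC.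
rewrite hornerD hornerN hornerC => ->; exact: mM.
Qed.

Lemma prod_nonunit (b : S) (l : seq S) : mx_ideal (\prod_(a <- l) (b - a)) ->
  exists2 a, a \in l & mx_ideal (b - a).
Proof.
elim: l => [|c l IH]; first by rewrite big_nil => /m1.
rewrite big_cons /Defs.mx_ideal unitrM negb_and => /orP [h|h].
  by exists c => //; rewrite mem_head.
by have [a ha ha'] := IH h; exists a => //; rewrite in_cons ha orbT.
Qed.

Lemma root_mod (d : nat) (a : S) : residue_alg_closed S -> (0 < d)%N ->
  a \is a GRing.unit -> exists r : S, mx_ideal (r ^+ d * a - 1).
Proof.
move=> Hac hd ha.
have hs : (1 < size ('X^d - (a^-1)%:P)%R)%N by rewrite size_XnsubC.
have [r hr] := Hac ('X^d - (a^-1)%:P) (monicXnsubC _ hd) hs.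
exists r; move: hr; rewrite hornerD hornerN hornerXn hornerC => hr.
have -> : r ^+ d * a - 1 = a * (r ^+ d - a^-1) by rewrite mulrBr mulrV // mulrC.
exact: mM.
Qed.

Lemma interp (d : nat) (l : seq S) : residue_alg_closed S -> (0 < d)%N ->
  (forall a, a \in l -> a \is a GRing.unit) ->
  exists p : {poly S}, forall a, a \in l -> mx_ideal (p.[a] ^+ d * a - 1).
Proof.
move=> Hac hd; elim: l => [|b l IH] hu; first by exists 0.
have [p hp] : exists p : {poly S}, forall a, a \in l -> mx_ideal (p.[a] ^+ d * a - 1).
  by apply: IH => a ha; apply: hu; rewrite in_cons ha orbT.
have hb : b \is a GRing.unit by apply: hu; rewrite mem_head.
set pi := \prod_(a <- l) (b - a).
have [hpi|hpi] := boolP (pi \is a GRing.unit).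
  have [r hr] := root_mod Hac hd hb.
  exists (p + ((r - p.[b]) / pi) *: \prod_(a <- l) ('X - a%:P)) => a.
  have hev : forall x, (p + ((r - p.[b]) / pi) *: \prod_(a <- l) ('X - a%:P)).[x]
     = p.[x] + (r - p.[b]) / pi * \prod_(a <- l) (x - a).
    by move=> x; rewrite hornerD hornerZ horner_prod; congr (_ + _ * _);
       apply: eq_bigr => i _; rewrite hornerXsubC.
  rewrite in_cons => /orP [/eqP ->|ha].
    by rewrite hev -/pi mulrVK // [p.[b] + _]addrC subrK.
  rewrite hev (big_rem a ha) /= subrr mul0r mulr0 addr0; exact: hp.
exists p => a; rewrite in_cons => /orP [/eqP ->|ha]; last exact: hp.
have [c hc hbc] := prod_nonunit hpi.
have := poly_cong (p ^+ d * 'X) hbc.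
rewrite !hornerM !horner_exp !hornerX => h.
have -> : p.[b] ^+ d * b - 1 = (p.[b] ^+ d * b - p.[c] ^+ d * c) + (p.[c] ^+ d * c - 1).
  by rewrite addrA subrK.
by apply: mD => //; apply: hp.
Qed.

Lemma gpow (g : {poly S}) (l : seq S) : (forall a, a \in l -> mx_ideal g.[a]) ->
  exists h, polym (g ^+ (size l) - \prod_(a <- l) ('X - a%:P) * h).
Proof.
elim: l => [|a l IH] hl.
  by exists 1; rewrite big_nil expr0 mulr1 subrr; apply: polym0.
have [h hh] : exists h, polym (g ^+ (size l) - \prod_(a <- l) ('X - a%:P) * h).
  by apply: IH => b hb; apply: hl; rewrite in_cons hb orbT.
have hr : root (g - g.[a]%:P) a by rewrite /root hornerD hornerN hornerC subrr.
have [q hq] := factor_theorem _ _ hr.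
exists (q * h); rewrite big_cons /= exprS.
set P := \prod_(j <- l) ('X - j%:P) in hh *.
set E := g ^+ size l - P * h in hh.
have -> : g ^+ size l = P * h + E by rewrite /E addrC subrK.
have -> : g = q * ('X - a%:P) + g.[a]%:P by rewrite -hq subrK.
have -> : (q * ('X - a%:P) + (g.[a])%:P) * (P * h + E) - ('X - a%:P) * P * (q * h)
  = (g.[a])%:P * (P * h) + (q * ('X - a%:P) + (g.[a])%:P) * E by ring.
apply: polymD; first by apply: polymMr; apply: polymC; apply: hl; rewrite mem_head.
exact: polymM.
Qed.


End Ideals.

Lemma binom_aux (R : comNzRingType) (m : nat) (y : R) :
  exists w, (1 + y) ^+ m = 1 + m%:R * y + y ^+ 2 * w.
Proof.
elim: m => [|m [w hw]]; first by exists 0; rewrite expr0 mul0r mulr0 !addr0.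
exists (m%:R + w + w * y); rewrite exprSr hw mulrSr; ring.
Qed.

Lemma newton_id (R : comNzRingType) (d : nat) (c x : R) : d%:R * c = 1 ->
  exists w, 1 - (1 - x) * (1 + c * x) ^+ d = x ^+ 2 * w.
Proof.
move=> hc; have [w hw] := binom_aux d (c * x).
exists (1 - c ^+ 2 * w + x * c ^+ 2 * w); rewrite hw mulrA hc mul1r; ring.
Qed.

Section Newton.
Variable S : comUnitRingType.
Variable d : nat.
Variable c : S.
Hypothesis hc : d%:R * c = 1.

Definition Ep (U : {poly S}) : {poly S} := 1 - U ^+ d * 'X.

Fixpoint newton (U : {poly S}) (k : nat) : {poly S} :=
  match k with 0 => U | k'.+1 => newton U k' * (1 + c%:P * Ep (newton U k')) end.

Lemma newtonE U k : exists V, Ep (newton U k) = Ep U ^+ k.+1 * V.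
Proof.
elim: k => [|k [V hV]]; first by exists 1; rewrite mulr1 expr1.
have hcP : d%:R * c%:P = 1 :> {poly S} by rewrite -(rmorph_nat (@polyC S)) -polyCM hc.
have [w hw] := newton_id (Ep (newton U k)) hcP.
exists (Ep U ^+ k * V ^+ 2 * w).
have hW : newton U k ^+ d * 'X = 1 - Ep (newton U k) by rewrite /Ep opprB addrC subrK.
rewrite /= {1}/Ep exprMn mulrAC hW hw hV !exprS expr0 mulr1; ring.
Qed.

Lemma newton_step U k : newton U k.+1 - newton U k = newton U k * c%:P * Ep (newton U k).
Proof. rewrite /=; ring. Qed.

End Newton.

Section Mat.
Variable S : comUnitRingType.
Hypothesis Hloc : local_ring S.
Local Notation mx_ideal := (@Defs.mx_ideal S).
Variable n' : nat.
Local Notation MT := 'M[S]_n'.+1.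

Definition MI k (A : MT) := forall i j, mx_pow k (A i j).

Lemma MID k A B : MI k A -> MI k B -> MI k (A + B).
Proof. by move=> ha hb i j; rewrite mxE; apply: powID. Qed.
Lemma MIN k A : MI k A -> MI k (- A).
Proof. by move=> ha i j; rewrite mxE; apply: powIN. Qed.
Lemma MIB k A B : MI k A -> MI k B -> MI k (A - B).
Proof. by move=> ha hb; apply: MID => //; apply: MIN. Qed.
Lemma MIMl k A B : MI k A -> MI k (B * A).
Proof.
move=> ha i j; rewrite -mulmxE mxE; apply: powI_sum => // l _; exact: powIM.
Qed.
Lemma MIMr k A B : MI k A -> MI k (A * B).
Proof.
move=> ha i j; rewrite -mulmxE mxE; apply: powI_sum => // l _; exact: powIMr.
Qed.
Lemma MI_mul a b A B : MI a A -> MI b B -> MI (a + b) (A * B).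
Proof.
move=> ha hb i j; rewrite -mulmxE mxE; apply: powI_sum => // l _; exact: powI_mul.
Qed.
Lemma MI_X a A k : MI a A -> MI (a * k) (A ^+ k).
Proof.
move=> ha; elim: k => [|k IH]; first by move=> i j; rewrite muln0.
by rewrite exprSr mulnS addnC; apply: MI_mul.
Qed.
Lemma MI_le k l A : (k <= l)%N -> MI l A -> MI k A.
Proof. by move=> hkl h i j; apply: powI_le (h i j). Qed.
Lemma MI_powdiff k A B m : MI k (A - B) -> MI k (A ^+ m - B ^+ m).
Proof.
move=> h; elim: m => [|m IH]; first by rewrite !expr0 subrr => i j; rewrite mxE; apply: powI0.
have -> : A ^+ m.+1 - B ^+ m.+1 = A * (A ^+ m - B ^+ m) + (A - B) * B ^+ m.
  by rewrite !exprS mulrBr mulrBl addrA subrK.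
by apply: MID; [apply: MIMl | apply: MIMr].
Qed.
Lemma MI_horner (A : MT) q : polym q -> MI 1 (horner_mx A q).
Proof.
move=> hq i j.
rewrite -[q]coefK poly_def rmorph_sum summxE; apply: powI_sum => // l _.
change (mx_pow 1 ((horner_mx A (q`_l *: 'X^l)) i j)).
have E : horner_mx A (q`_l *: 'X^l) = q`_l *: (A ^+ l) by rewrite horner_mxZ rmorphXn /= horner_mx_X.
rewrite E mxE.
by apply/powI1 => //; apply: mMr.
Qed.

Lemma MI_zero (A : MT) : (forall x : S, (forall k, mx_pow k x) -> x = 0) ->
  (forall k, MI k A) -> A = 0.
Proof. by move=> Hsep h; apply/matrixP => i j; rewrite mxE; apply: Hsep => k; apply: h. Qed.

Lemma prod_unit_each (l : seq S) : \prod_(a <- l) (- a) \is a GRing.unit ->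
  forall a, a \in l -> a \is a GRing.unit.
Proof.
elim: l => [|b l IH] //; rewrite big_cons unitrM => /andP [hb hl] a.
rewrite in_cons => /orP [/eqP ->|ha]; first by rewrite -unitrN.
exact: IH.
Qed.

Lemma root_mx (d : nat) (sg : MT) : (0 < d)%N -> residue_alg_closed S ->
  ~ mx_ideal d%:R -> complete_local S -> sg \is a GRing.unit ->
  exists rho : MT, rho ^+ d * sg = 1 /\
    forall psi : MT, psi * sg = sg * psi -> psi * rho = rho * psi.
Proof.
move=> hd Hac Hd [Hsep Hcomp] hsg.
have [l hl] := factor_mod Hloc Hac (leqnn _) (char_poly_monic sg).
set P := \prod_(a <- l) ('X - a%:P) in hl.
have hu : forall a, a \in l -> a \is a GRing.unit.
  apply: prod_unit_each.
  have h0 := hl 0%N; rewrite coefB char_poly_det in h0.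
  have hdet : (-1) ^+ n'.+1 * \det sg \is a GRing.unit.
    by rewrite unitrM unitrX ?unitrN1 // -unitmxE.
  have := unit_m Hloc hdet h0; rewrite opprB addrC subrK -horner_coef0 /P horner_prod.
  by under eq_bigr => a _ do rewrite hornerXsubC sub0r.
have [p hp] := interp Hloc Hac hd hu.
set g := p ^+ d * 'X - 1.
have hg : forall a, a \in l -> mx_ideal g.[a].
  by move=> a ha; rewrite /g hornerD hornerN hornerC hornerM horner_exp hornerX; apply: hp.
have [h hh] := gpow Hloc hg.
set N := size l in hh.
have hgN : MI 1 (horner_mx sg g ^+ N).
  have : polym (g ^+ N - char_poly sg * h).
    have -> : g ^+ N - char_poly sg * h = (g ^+ N - P * h) - (char_poly sg - P) * h.
      by rewrite mulrBl opprB addrA subrK.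
    by apply: polymB => //; apply: polymMr.
  move/(MI_horner sg); rewrite rmorphB rmorphM /= Cayley_Hamilton mul0r subr0.
  by rewrite rmorphXn.
have hdu : (d%:R : S) \is a GRing.unit by apply/negPn/negP.
set c := (d%:R : S)^-1.
have hc : d%:R * c = 1 by rewrite mulrV.
set U1 := newton d c p N.
have hE1 : MI 1 (horner_mx sg (Ep d U1)).
  have [V hV] := newtonE hc p N.
  rewrite hV /Ep -/g.
  have -> : 1 - p ^+ d * 'X = - g by rewrite /g opprB.
  rewrite exprNn [g ^+ N.+1]exprSr !rmorphM /= !rmorphXn /=.
  apply: MIMr; apply: MIMl; apply: MIMr; exact: hgN.
pose u k := horner_mx sg (newton d c U1 k).
pose e k := horner_mx sg (Ep d (newton d c U1 k)).
have he : forall k, MI k.+1 (e k).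
  move=> k; have [V hV] := newtonE hc U1 k.
  rewrite /e hV rmorphM rmorphXn /=; apply: MIMr.
  by have := MI_X k.+1 hE1; rewrite mul1n.
have hstep : forall k, MI k (u k.+1 - u k).
  move=> k; rewrite /u -rmorphB newton_step rmorphM /=.
  by apply: MI_le (leqnSn k) _; apply: MIMl.
have hue : forall k, u k ^+ d * sg = 1 - e k.
  by move=> k; rewrite /u /e /Ep rmorphB rmorph1 rmorphM rmorphXn /= horner_mx_X opprB addrC subrK.
have [F hF] : exists F : 'I_n'.+1 * 'I_n'.+1 -> S,
    forall ij k, mx_pow k (F ij - u k ij.1 ij.2).
  apply: (@fin_all_exists _ (fun _ => S) (fun ij x => forall k, mx_pow k (x - u k ij.1 ij.2))).
  move=> [i j]; apply: Hcomp => k /=.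
  by have := hstep k i j; rewrite !mxE.
set rho := \matrix_(i, j) F (i, j) : MT.
have hrho : forall k, MI k (rho - u k).
  by move=> k i j; rewrite !mxE; apply: hF.
exists rho; split.
  apply/eqP; rewrite -subr_eq0; apply/eqP; apply: MI_zero => // k.
  have -> : rho ^+ d * sg - 1 = (rho ^+ d - u k ^+ d) * sg - e k.
    by rewrite mulrBl hue opprB [e k - 1]addrC addrA addrK.
  apply: MIB; first by apply: MIMr; apply: MI_powdiff.
  by apply: MI_le (leqnSn k) _.
move=> psi hpsi.
have hcomm : forall k, psi * u k = u k * psi.
  move=> k; have : comm_mx sg psi by rewrite /comm_mx !mulmxE.
  move/(comm_horner_mx (newton d c U1 k)); rewrite /comm_mx !mulmxE => ->. done.
apply/eqP; rewrite -subr_eq0; apply/eqP; apply: MI_zero => // k.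
have -> : psi * rho - rho * psi = psi * (rho - u k) - (rho - u k) * psi.
  by rewrite mulrBr mulrBl hcomm opprB addrA subrK.
by apply: MIB; [apply: MIMl | apply: MIMr].
Qed.

End Mat.

Fixpoint gamma (R : pzSemiRingType) (A : nat -> R) (k : nat) : R :=
  if k is k'.+1 then A k' * gamma A k' else 1.

Lemma foldr_prod (S : comUnitRingType) (n d : nat) (X : 'I_d -> 'M[S]_n.+1) (s : seq 'I_d) :
  foldr (fun i acc => X i *m acc) 1%:M s = \prod_(i <- s) X i.
Proof.
elim: s => [|a s IH] /=; first by rewrite big_nil.
by rewrite big_cons IH mulmxE.
Qed.

Lemma iter_pow (S : comUnitRingType) (n : nat) (M : 'M[S]_n.+1) k :
  iter k (mulmx M) 1%:M = M ^+ k.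
Proof. elim: k => [|k IH] //=; by rewrite IH mulmxE exprS. Qed.

Theorem corollary4p4 (S : comUnitRingType) (d : nat) (f : S) (n : nat)
  (X : mfobj S d n) :
  (2 <= d)%N ->
  regular_local_ring S -> complete_local S ->
  residue_alg_closed S -> residue_char_ndvd S d ->
  f != 0 -> mx_pow 2 f ->
  is_MF f X -> mf_indecomposable f X ->
  mf_iso X (mf_shift X) ->
  exists phi : 'M[S]_n,
    mx_pow_n phi d = f%:M /\ mf_iso X (fun _ : 'I_d => phi).
Proof.
move=> hd Hreg Hcomp Hac Hd hf0 hf2 hMF [hn hind] [al [be [hal [hbe [hba hab]]]]].
have Hloc : local_ring S by case: Hreg.
destruct n as [|n']; first by [].
destruct d as [|d']; first by [].
pose Xn k := X (inord k) : 'M[S]_n'.+1.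
pose A k := al (inord k) : 'M[S]_n'.+1.
have ordS_lt : forall k, (k < d')%N -> ordS (inord k : 'I_d'.+1) = inord k.+1.
  move=> k hk; apply/val_inj; rewrite /= !inordK ?modn_small //; by apply: (leq_trans hk).
have ordS_last : ordS (inord d' : 'I_d'.+1) = inord 0.
  by apply/val_inj; rewrite /= !inordK // modnn.
have hint : forall k, (k < d')%N -> A k * Xn k = Xn k.+1 * A k.+1.
  by move=> k hk; have := hal (inord k); rewrite !mulmxE /mf_shift ordS_lt.
have hwrap : A d' * Xn d' = Xn 0 * A 0.
  by have := hal (inord d'); rewrite !mulmxE /mf_shift ordS_last.
have hAu : forall k, A k \is a GRing.unit.
  by move=> k; have [h _] := mulmx1_unit (hab (inord k)).
have hgu : forall k, gamma A k \is a GRing.unit.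
  elim => [|k IH] /=; first exact: unitr1.
  by rewrite unitrMr.
set sg := gamma A d'.+1.
set psi := Xn 0 * A 0.
have hK : forall k, (k <= d')%N -> Xn k * A k * gamma A k = gamma A k * psi.
  elim => [|k IH] hk /=; first by rewrite mulr1 mul1r.
  have e : Xn k.+1 * A k.+1 = A k * Xn k by rewrite hint.
  have -> : Xn k.+1 * A k.+1 * (A k * gamma A k) = A k * (Xn k * A k * gamma A k).
    by rewrite !mulrA e.
  by rewrite IH ?(ltnW hk) // mulrA.
have hcomm : psi * sg = sg * psi.
  by rewrite /sg /= -mulrA -hK // !mulrA hwrap.
have [rho [hrho hpr]] := root_mx Hloc (ltn0Sn d') Hac Hd Hcomp (hgu d'.+1).
have hpr' := hpr psi hcomm.
have hpk : forall k, psi * rho ^+ k = rho ^+ k * psi by move=> k; apply: commrX.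
have hsr : sg * rho ^+ d'.+1 = 1.
  by have := @mulmx1C _ _ (rho ^+ d'.+1) sg; rewrite !mulmxE; apply.
have hru : rho \is a GRing.unit.
  have : rho *m (rho ^+ d' * sg) = 1%:M by rewrite mulmxE mulrA -exprS.
  by case/mulmx1_unit.
pose G k := gamma A k * rho ^+ k.
have hGu : forall k, G k \is a GRing.unit.
  by move=> k; rewrite /G unitrMr ?unitrX.
set phi := psi * rho.
have hGn : forall k, (k < d')%N -> Xn k * G k.+1 = G k * phi.
  move=> k hk; rewrite /G /phi /= exprSr !mulrA -/psi (hK k (ltnW hk)).
  by rewrite -(mulrA (gamma A k) psi) hpk !mulrA.
have hGlast : Xn d' * G 0 = G d' * phi.
  rewrite /G /= expr0 !mulr1.
  have h1 : Xn d' * sg = gamma A d' * psi by rewrite /sg /= mulrA hK.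
  rewrite -[Xn d']mulr1 -hsr mulrA h1 /phi exprSr.
  by rewrite mulrA -(mulrA (gamma A d') psi) hpk !mulrA.
have hG : forall i : 'I_d'.+1, X i * G (ordS i) = G i * phi.
  move=> i; have -> : X i = Xn i by rewrite /Xn inord_val.
  have hi := ltn_ord i; rewrite /=.
  have [hlt|hge] := ltnP i d'.
    by rewrite modn_small // hGn.
  have hie : nat_of_ord i = d' by apply/eqP; rewrite eqn_leq hge -ltnS hi.
  by rewrite hie modnn hGlast.
exists phi; split.
  rewrite /mx_pow_n iter_pow.
  pose Pn k := \prod_(0 <= i < k) Xn i.
  have hpow : forall k, (k <= d')%N -> phi ^+ k = Pn k * G k.
    elim => [|k IH] hk; first by rewrite /Pn big_geq // /G /= !mul1r.
    rewrite exprSr IH ?(ltnW hk) // -mulrA -hGn // mulrA /Pn big_nat_recr //.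
  have -> : phi ^+ d'.+1 = Pn d'.+1.
    rewrite exprSr hpow // -mulrA -hGlast /G /= expr0 !mulr1 /Pn big_nat_recr //.
  rewrite -hMF /mx_chain foldr_prod /Pn /index_iota subn0 -val_enum_ord big_map.
  by apply: eq_bigr => i _; rewrite /Xn inord_val.
exists (fun i => (G i)^-1), (fun i => G i); split; [|split; [|split]].
- move=> i; rewrite !mulmxE.
  rewrite -[X i](mulrK (hGu (ordS i))) mulrA hG.
  by rewrite mulKr.
- by move=> i; rewrite !mulmxE hG.
- by move=> i; rewrite mulmxE mulrV.
- by move=> i; rewrite mulmxE mulVr.
Qed.
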